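(* For every process $P$ and session type $S$ such that $\emptyset\cdot\emptyset\vdash P:S$, and every trace $t$ such that $\langle P;[\![S]\!]\rangle \xRightarrow{t} \langle P';M'\rangle$ where $\langle P';M'\rangle$ has no outgoing transition and $P'\neq\mathbf{0}$, we have $M'=\mathsf{no}_E$.
   Context: Values $v,u,w$ (including tuples), value variables $x,y,z$, process variables $X,Y$; $a$ ranges over values and value variables. Boolean predicates $A$ include $\mathsf{tt},\mathsf{ff}$, equalities/comparisons of values, conjunction, negation, and for each base type $\mathsf{B}$ a predicate $\mathsf{isValue}_{\mathsf{B}}(v)$ that evaluates to $\mathsf{tt}$ if $v$ is of type $\mathsf{B}$ and to $\mathsf{ff}$ otherwise; $A\Downarrow\mathsf{tt}$ / $A\Downarrow\mathsf{ff}$ denote evaluation. Predicates are type-checked by standard rules ($\Gamma\vdash A:\mathsf{Bool}$). Processes: $P,Q ::= \triangleleft \mathtt{l}(a).P \mid \triangleright\{\mathtt{l}_i(x_i).P_i\}_{i\in I} \mid \mu_X.P \mid X \mid \mathsf{if}\ A\ \mathsf{then}\ P\ \mathsf{else}\ Q \mid \mathbf{0}$, with guarded recursion. Process transitions: $\mu_X.P \xrightarrow{\tau} P[\mu_X.P/X]$; $\triangleleft\mathtt{l}(v).P \xrightarrow{\triangleleft \mathtt{l}(v)} P$; $\triangleright\{\mathtt{l}_i(x_i).P_i\}_{i\in I} \xrightarrow{\triangleright \mathtt{l}_j(v)} P_j[v/x_j]$ for $j\in I$; $\mathsf{if}\ A\ \mathsf{then}\ P\ \mathsf{else}\ Q \xrightarrow{\tau}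 P$ if $A\Downarrow\mathsf{tt}$ and $\xrightarrow{\tau} Q$ if $A\Downarrow\mathsf{ff}$. Base types $\mathsf{B} ::= \mathsf{Int}\mid\mathsf{Str}\mid\mathsf{Bool}\mid\dots\mid(\mathsf{B},\mathsf{B})$. Session types: $S ::= \oplus\{!\mathtt{l}_i(\mathsf{B}_i).S_i\}_{i\in I} \mid \&\{?\mathtt{l}_i(\mathsf{B}_i).S_i\}_{i\in I} \mid \mathsf{rec}\ X.S \mid X \mid \mathsf{end}$, with $I\neq\emptyset$, labels pairwise distinct, guarded recursion; types are equi-recursive. Typing with $\Theta$ (process variables to session types) and $\Gamma$ (value variables to base types): $\Gamma\vdash x:\mathsf{B}$ if $\Gamma(x)=\mathsf{B}$; $\Gamma\vdash v:\mathsf{B}$ if $v\in\mathsf{B}$. (tBra) if for all $i\in I$, $\Theta\cdot\Gamma,x_i:\mathsf{B}_i\vdash P_i:S_i$, then $\Theta\cdot\Gamma\vdash \triangleright\{\mathtt{l}_i(x_i).P_i\}_{i\in I\cup J} : \&\{?\mathtt{l}_i(\mathsf{B}_i).S_i\}_{i\in I}$; (tSel) if there is $i\in I$ with $\mathtt{l}=\mathtt{l}_i$, $\Gamma\vdash a:\mathsf{B}_i$, $\Theta\cdot\Gamma\vdash P:S_i$, then $\Theta\cdot\Gamma\vdash \triangleleft\mathtt{l}(a).P : \oplus\{!\mathtt{l}_i(\mathsf{B}_i).S_i\}_{i\in I}$; (tRec) $\Theta,X:S\cdot\Gamma\vdash P:S$ implies $\Theta\cdot\Gamma\vdash\mu_X.P:S$;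 (tPVar) $\Theta(X)=S$ implies $\Theta\cdot\Gamma\vdash X:S$; (tIf) $\Gamma\vdash A:\mathsf{Bool}$, $\Theta\cdot\Gamma\vdash P:S$, $\Theta\cdot\Gamma\vdash Q:S$ imply $\Theta\cdot\Gamma\vdash \mathsf{if}\ A\ \mathsf{then}\ P\ \mathsf{else}\ Q:S$; (tNil) $\Theta\cdot\Gamma\vdash\mathbf{0}:\mathsf{end}$. Monitors: $M,N ::= \triangleleft\mathtt{l}(a).M \mid \triangleright\{\mathtt{l}_i(x_i).M_i\}_{i\in I} \mid \blacktriangle\mathtt{l}(a).M \mid \blacktriangledown\{\mathtt{l}_i(x_i).M_i\}_{i\in I} \mid \mu_X.M \mid X \mid \mathsf{if}\ A\ \mathsf{then}\ M\ \mathsf{else}\ N \mid \mathbf{0} \mid \mathsf{no}_P \mid \mathsf{no}_E$. Monitor transitions: $\triangleleft\mathtt{l}(v).M\xrightarrow{\triangleleft\mathtt{l}(v)}M$; $\blacktriangle\mathtt{l}(v).M\xrightarrow{\blacktriangle\mathtt{l}(v)}M$; $\mu_X.M\xrightarrow{\tau}M[\mu_X.M/X]$; $\triangleright\{\mathtt{l}_i(x_i).M_i\}_{i\in I}\xrightarrow{\triangleright\mathtt{l}_j(v)}M_j[v/x_j]$ and $\blacktriangledown\{\mathtt{l}_i(x_i).M_i\}_{i\in I}\xrightarrow{\blacktriangledown\mathtt{l}_j(v)}M_j[v/x_j]$ for $j\in I$; conditionals as for processes; $\triangleright\{\mathtt{l}_i(x_i).M_i\}_{i\in I}\xrightarrow{\triangleright\mathtt{l}(v)}\mathsf{no}_P$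 and $\blacktriangledown\{\mathtt{l}_i(x_i).M_i\}_{i\in I}\xrightarrow{\blacktriangledown\mathtt{l}(v)}\mathsf{no}_E$ whenever $\mathtt{l}\neq\mathtt{l}_i$ for all $i\in I$. ($\mathsf{no}_P,\mathsf{no}_E,\mathbf{0}$ have no transitions.) Composite system $\langle P;M\rangle$: synchronisation $P\xrightarrow{\triangleleft\mathtt{l}(v)}P'$, $M\xrightarrow{\triangleright\mathtt{l}(v)}M'$ gives $\langle P;M\rangle\xrightarrow{\tau}\langle P';M'\rangle$; $P\xrightarrow{\triangleright\mathtt{l}(v)}P'$, $M\xrightarrow{\triangleleft\mathtt{l}(v)}M'$ gives $\langle P;M\rangle\xrightarrow{\tau}\langle P';M'\rangle$; $M\xrightarrow{\alpha}M'$ with $\alpha\in\{\blacktriangle\mathtt{l}(v),\blacktriangledown\mathtt{l}(v)\}$ gives $\langle P;M\rangle\xrightarrow{\alpha}\langle P;M'\rangle$; $\tau$-moves of $P$ or of $M$ alone lift to $\langle P;M\rangle$. A trace $t$ is a finite sequence of actions $\blacktriangle\mathtt{l}(v)$, $\blacktriangledown\mathtt{l}(v)$; $\xRightarrow{t}$ is a sequence of transitions with visible labels $t$ interleaved with finitely many $\tau$'s. Synthesis: $[\![\oplus\{!\mathtt{l}_i(\mathsf{B}_i).S_i\}_{i\in I}]\!] = \triangleright\{\mathtt{l}_i(x_i).\,\mathsf{if}\ \mathsf{isValue}_{\mathsf{B}_i}(x_i)\ \mathsf{then}\ \blacktriangle\mathtt{l}_i(x_i).[\![S_i]\!]\ \mathsf{else}\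 \mathsf{no}_P\}_{i\in I}$; $[\![\&\{?\mathtt{l}_i(\mathsf{B}_i).S_i\}_{i\in I}]\!] = \blacktriangledown\{\mathtt{l}_i(x_i).\,\mathsf{if}\ \mathsf{isValue}_{\mathsf{B}_i}(x_i)\ \mathsf{then}\ \triangleleft\mathtt{l}_i(x_i).[\![S_i]\!]\ \mathsf{else}\ \mathsf{no}_E\}_{i\in I}$; $[\![\mathsf{rec}\ X.S]\!]=\mu_X.[\![S]\!]$; $[\![X]\!]=X$; $[\![\mathsf{end}]\!]=\mathbf{0}$. *)

(* Defs.v *)
From Stdlib Require Import List ZArith String Bool Arith.
Import ListNotations.

Definition label := nat.
Definition var := nat.
Definition pvar := nat.

Inductive btype := TInt | TStr | TBool | TPair (B1 B2 : btype).

Inductive value := VInt (n : Z) | VStr (s : string) | VBool (b : bool)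
                 | VPair (v1 v2 : value).

Fixpoint has_btype (v : value) (B : btype) : Prop :=
  match v, B with
  | VInt _, TInt | VStr _, TStr | VBool _, TBool => True
  | VPair v1 v2, TPair B1 B2 => has_btype v1 B1 /\ has_btype v2 B2
  | _, _ => False
  end.

Fixpoint has_btypeb (v : value) (B : btype) : bool :=
  match v, B with
  | VInt _, TInt | VStr _, TStr | VBool _, TBool => true
  | VPair v1 v2, TPair B1 B2 => has_btypeb v1 B1 && has_btypeb v2 B2
  | _, _ => false
  end.

Fixpoint value_eqb (v w : value) : bool :=
  match v, w with
  | VInt n, VInt m => Z.eqb n m
  | VStr s, VStr t => String.eqb s t
  | VBool b, VBool c => Bool.eqb b c
  | VPair v1 v2, VPair w1 w2 => value_eqb v1 w1 && value_eqb v2 w2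
  | _, _ => false
  end.

Inductive atom := AVal (v : value) | AVar (x : var).

Inductive pred :=
| PTT | PFF
| PEq (a1 a2 : atom)
| PLe (a1 a2 : atom)
| PLt (a1 a2 : atom)
| PAnd (A1 A2 : pred)
| PNot (A : pred)
| PIsValue (B : btype) (a : atom).

(* evaluation A ⇓ b (only defined on closed, meaningful predicates) *)
Fixpoint eval_pred (A : pred) : option bool :=
  match A with
  | PTT => Some true
  | PFF => Some false
  | PEq (AVal v) (AVal w) => Some (value_eqb v w)
  | PLe (AVal (VInt n)) (AVal (VInt m)) => Some (Z.leb n m)
  | PLt (AVal (VInt n)) (AVal (VInt m)) => Some (Z.ltb n m)
  | PAnd A1 A2 =>
      match eval_pred A1, eval_pred A2 with
      | Some b1, Some b2 => Some (b1 && b2) | _, _ => None end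
  | PNot A1 => option_map negb (eval_pred A1)
  | PIsValue B (AVal v) => Some (has_btypeb v B)
  | _ => None
  end.

Definition asubst (x : var) (v : value) (a : atom) : atom :=
  match a with
  | AVar y => if Nat.eqb x y then AVal v else a
  | AVal _ => a
  end.

Fixpoint predsubst (x : var) (v : value) (A : pred) : pred :=
  match A with
  | PTT => PTT | PFF => PFF
  | PEq a1 a2 => PEq (asubst x v a1) (asubst x v a2)
  | PLe a1 a2 => PLe (asubst x v a1) (asubst x v a2)
  | PLt a1 a2 => PLt (asubst x v a1) (asubst x v a2)
  | PAnd A1 A2 => PAnd (predsubst x v A1) (predsubst x v A2)
  | PNot A1 => PNot (predsubst x v A1)
  | PIsValue B a => PIsValue B (asubst x v a)
  end.

Inductive proc :=
| PSel (l : label) (a : atom) (P : proc)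
| PBra (bs : list (label * var * proc))
| PRec (X : pvar) (P : proc)
| PVar (X : pvar)
| PIf (A : pred) (P Q : proc)
| PNil.

Fixpoint psubst_v (x : var) (v : value) (P : proc) : proc :=
  match P with
  | PSel l a Q => PSel l (asubst x v a) (psubst_v x v Q)
  | PBra bs => PBra (map (fun '(l, y, Q) =>
                  (l, y, if Nat.eqb x y then Q else psubst_v x v Q)) bs)
  | PRec X Q => PRec X (psubst_v x v Q)
  | PVar X => PVar X
  | PIf A Q1 Q2 => PIf (predsubst x v A) (psubst_v x v Q1) (psubst_v x v Q2)
  | PNil => PNil
  end.

Fixpoint psubst_p (X : pvar) (R : proc) (P : proc) : proc :=
  match P with
  | PSel l a Q => PSel l a (psubst_p X R Q)
  | PBra bs => PBra (map (fun '(l, y, Q) => (l, y, psubst_p X R Q)) bs)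
  | PRec Y Q => if Nat.eqb X Y then P else PRec Y (psubst_p X R Q)
  | PVar Y => if Nat.eqb X Y then R else P
  | PIf A Q1 Q2 => PIf A (psubst_p X R Q1) (psubst_p X R Q2)
  | PNil => PNil
  end.

Inductive plab := PLTau | PLOut (l : label) (v : value) | PLIn (l : label) (v : value).

Inductive pstep : proc -> plab -> proc -> Prop :=
| ps_rec X P : pstep (PRec X P) PLTau (psubst_p X (PRec X P) P)
| ps_out l v P : pstep (PSel l (AVal v) P) (PLOut l v) P
| ps_in bs l x P v : In (l, x, P) bs -> pstep (PBra bs) (PLIn l v) (psubst_v x v P)
| ps_if_t A P Q : eval_pred A = Some true -> pstep (PIf A P Q) PLTau P
| ps_if_f A P Q : eval_pred A = Some false -> pstep (PIf A P Q) PLTau Q.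

Fixpoint punguarded (X : pvar) (P : proc) : Prop :=
  match P with
  | PVar Y => X = Y
  | PRec Y Q => X <> Y /\ punguarded X Q
  | PIf _ Q1 Q2 => punguarded X Q1 \/ punguarded X Q2
  | _ => False
  end.

Fixpoint wf_proc (P : proc) : Prop :=
  match P with
  | PSel _ _ Q => wf_proc Q
  | PBra bs => NoDup (map (fun '(l, _, _) => l) bs) /\
      (fix go (bs : list (label * var * proc)) : Prop :=
         match bs with [] => True | (_, _, Q) :: r => wf_proc Q /\ go r end) bs
  | PRec X Q => ~ punguarded X Q /\ wf_proc Q
  | PVar _ => True
  | PIf _ Q1 Q2 => wf_proc Q1 /\ wf_proc Q2
  | PNil => True
  end.

Inductive stype :=
| TSel (bs : list (label * btype * stype))
| TBra (bs : list (label * btype * stype))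
| TRec (X : pvar) (S : stype)
| TVar (X : pvar)
| TEnd.

Fixpoint tsubst (X : pvar) (R : stype) (S : stype) : stype :=
  match S with
  | TSel bs => TSel (map (fun '(l, B, S') => (l, B, tsubst X R S')) bs)
  | TBra bs => TBra (map (fun '(l, B, S') => (l, B, tsubst X R S')) bs)
  | TRec Y S' => if Nat.eqb X Y then S else TRec Y (tsubst X R S')
  | TVar Y => if Nat.eqb X Y then R else S
  | TEnd => TEnd
  end.

Fixpoint tunguarded (X : pvar) (S : stype) : Prop :=
  match S with
  | TVar Y => X = Y
  | TRec Y S' => X <> Y /\ tunguarded X S'
  | _ => False
  end.

Fixpoint tfree (X : pvar) (S : stype) : Prop :=
  match S with
  | TSel bs | TBra bs =>
      (fix go (bs : list (label * btype * stype)) : Prop :=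
         match bs with [] => False | (_, _, S') :: r => tfree X S' \/ go r end) bs
  | TRec Y S' => X <> Y /\ tfree X S'
  | TVar Y => X = Y
  | TEnd => False
  end.

Fixpoint wf_stype (S : stype) : Prop :=
  match S with
  | TSel bs | TBra bs =>
      bs <> [] /\ NoDup (map (fun '(l, _, _) => l) bs) /\
      (fix go (bs : list (label * btype * stype)) : Prop :=
         match bs with [] => True | (_, _, S') :: r => wf_stype S' /\ go r end) bs
  | TRec X S' => ~ tunguarded X S' /\ wf_stype S'
  | TVar _ => True
  | TEnd => True
  end.

Definition closed_stype (S : stype) : Prop := forall X, ~ tfree X S.

Inductive unf : stype -> stype -> Prop :=
| unf_rec X S S' : unf (tsubst X (TRec X S) S) S' -> unf (TRec X S) S'
| unf_sel bs : unf (TSel bs) (TSel bs)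
| unf_bra bs : unf (TBra bs) (TBra bs)
| unf_var X : unf (TVar X) (TVar X)
| unf_end : unf TEnd TEnd.

(* equi-recursive type equality: equality of the (infinite) unfoldings,
   branches compared as sets indexed by labels *)
CoInductive teq : stype -> stype -> Prop :=
| teq_sel S T bs1 bs2 :
    unf S (TSel bs1) -> unf T (TSel bs2) ->
    (forall l B S1, In (l, B, S1) bs1 -> exists S2, In (l, B, S2) bs2 /\ teq S1 S2) ->
    (forall l B S2, In (l, B, S2) bs2 -> exists S1, In (l, B, S1) bs1 /\ teq S1 S2) ->
    teq S T
| teq_bra S T bs1 bs2 :
    unf S (TBra bs1) -> unf T (TBra bs2) ->
    (forall l B S1, In (l, B, S1) bs1 -> exists S2, In (l, B, S2) bs2 /\ teq S1 S2) ->
    (forall l B S2, In (l, B, S2) bs2 -> exists S1, In (l, B, S1) bs1 /\ teq S1 S2) ->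
    teq S T
| teq_var S T X : unf S (TVar X) -> unf T (TVar X) -> teq S T
| teq_end S T : unf S TEnd -> unf T TEnd -> teq S T.

Definition venv := list (var * btype).
Definition penv := list (pvar * stype).

Fixpoint lookup {A : Type} (E : list (nat * A)) (x : nat) : option A :=
  match E with
  | [] => None
  | (y, a) :: r => if Nat.eqb x y then Some a else lookup r x
  end.

Inductive atyped (G : venv) : atom -> btype -> Prop :=
| at_var x B : lookup G x = Some B -> atyped G (AVar x) B
| at_val v B : has_btype v B -> atyped G (AVal v) B.

Inductive ptyped (G : venv) : pred -> Prop :=
| pt_tt : ptyped G PTT
| pt_ff : ptyped G PFF
| pt_eq a1 a2 B : atyped G a1 B -> atyped G a2 B -> ptyped G (PEq a1 a2)
| pt_le a1 a2 : atyped G a1 TInt -> atyped G a2 TInt -> ptyped G (PLe a1 a2)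
| pt_lt a1 a2 : atyped G a1 TInt -> atyped G a2 TInt -> ptyped G (PLt a1 a2)
| pt_and A1 A2 : ptyped G A1 -> ptyped G A2 -> ptyped G (PAnd A1 A2)
| pt_not A : ptyped G A -> ptyped G (PNot A)
| pt_isv B a B' : atyped G a B' -> ptyped G (PIsValue B a).

Inductive typed : penv -> venv -> proc -> stype -> Prop :=
| tBra Th G pbs tbs :
    (forall l B S, In (l, B, S) tbs ->
       exists x P, In (l, x, P) pbs /\ typed Th ((x, B) :: G) P S) ->
    typed Th G (PBra pbs) (TBra tbs)
| tSel Th G l a P tbs B S :
    In (l, B, S) tbs -> atyped G a B -> typed Th G P S ->
    typed Th G (PSel l a P) (TSel tbs)
| tRec Th G X P S : typed ((X, S) :: Th) G P S -> typed Th G (PRec X P) S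
| tPVar Th G X S : lookup Th X = Some S -> typed Th G (PVar X) S
| tIf Th G A P Q S : ptyped G A -> typed Th G P S -> typed Th G Q S ->
    typed Th G (PIf A P Q) S
| tNil Th G : typed Th G PNil TEnd
| tEqui Th G P S S' : typed Th G P S -> teq S S' -> typed Th G P S'.

Inductive mon :=
| MSel (l : label) (a : atom) (M : mon)
| MBra (bs : list (label * var * mon))
| MUp (l : label) (a : atom) (M : mon)
| MDown (bs : list (label * var * mon))
| MRec (X : pvar) (M : mon)
| MVar (X : pvar)
| MIf (A : pred) (M N : mon)
| MNil
| MNoP
| MNoE.

Fixpoint msubst_v (x : var) (v : value) (M : mon) : mon :=
  match M with
  | MSel l a N => MSel l (asubst x v a) (msubst_v x v N)
  | MBra bs => MBra (map (fun '(l, y, N) =>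
                  (l, y, if Nat.eqb x y then N else msubst_v x v N)) bs)
  | MUp l a N => MUp l (asubst x v a) (msubst_v x v N)
  | MDown bs => MDown (map (fun '(l, y, N) =>
                  (l, y, if Nat.eqb x y then N else msubst_v x v N)) bs)
  | MRec X N => MRec X (msubst_v x v N)
  | MVar X => MVar X
  | MIf A N1 N2 => MIf (predsubst x v A) (msubst_v x v N1) (msubst_v x v N2)
  | MNil => MNil | MNoP => MNoP | MNoE => MNoE
  end.

Fixpoint msubst_p (X : pvar) (R : mon) (M : mon) : mon :=
  match M with
  | MSel l a N => MSel l a (msubst_p X R N)
  | MBra bs => MBra (map (fun '(l, y, N) => (l, y, msubst_p X R N)) bs)
  | MUp l a N => MUp l a (msubst_p X R N)
  | MDown bs => MDown (map (fun '(l, y, N) => (l, y, msubst_p X R N)) bs)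
  | MRec Y N => if Nat.eqb X Y then M else MRec Y (msubst_p X R N)
  | MVar Y => if Nat.eqb X Y then R else M
  | MIf A N1 N2 => MIf A (msubst_p X R N1) (msubst_p X R N2)
  | MNil => MNil | MNoP => MNoP | MNoE => MNoE
  end.

Inductive mlab :=
| MLTau
| MLOut (l : label) (v : value)
| MLIn (l : label) (v : value)
| MLUp (l : label) (v : value)
| MLDown (l : label) (v : value).

Inductive mstep : mon -> mlab -> mon -> Prop :=
| ms_out l v M : mstep (MSel l (AVal v) M) (MLOut l v) M
| ms_up l v M : mstep (MUp l (AVal v) M) (MLUp l v) M
| ms_rec X M : mstep (MRec X M) MLTau (msubst_p X (MRec X M) M)
| ms_in bs l x M v : In (l, x, M) bs -> mstep (MBra bs) (MLIn l v) (msubst_v x v M)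
| ms_down bs l x M v : In (l, x, M) bs -> mstep (MDown bs) (MLDown l v) (msubst_v x v M)
| ms_if_t A M N : eval_pred A = Some true -> mstep (MIf A M N) MLTau M
| ms_if_f A M N : eval_pred A = Some false -> mstep (MIf A M N) MLTau N
| ms_in_err bs l v : (forall l' x M, In (l', x, M) bs -> l' <> l) ->
    mstep (MBra bs) (MLIn l v) MNoP
| ms_down_err bs l v : (forall l' x M, In (l', x, M) bs -> l' <> l) ->
    mstep (MDown bs) (MLDown l v) MNoE.

Inductive vis := VUp (l : label) (v : value) | VDown (l : label) (v : value).
Inductive clab := CTau | CVis (a : vis).

Inductive cstep : proc * mon -> clab -> proc * mon -> Prop :=
| cs_sync_out P P' M M' l v :
    pstep P (PLOut l v) P' -> mstep M (MLIn l v) M' -> cstep (P, M) CTau (P', M')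
| cs_sync_in P P' M M' l v :
    pstep P (PLIn l v) P' -> mstep M (MLOut l v) M' -> cstep (P, M) CTau (P', M')
| cs_up P M M' l v : mstep M (MLUp l v) M' -> cstep (P, M) (CVis (VUp l v)) (P, M')
| cs_down P M M' l v : mstep M (MLDown l v) M' -> cstep (P, M) (CVis (VDown l v)) (P, M')
| cs_ptau P P' M : pstep P PLTau P' -> cstep (P, M) CTau (P', M)
| cs_mtau P M M' : mstep M MLTau M' -> cstep (P, M) CTau (P, M').

Inductive wtrace : proc * mon -> list vis -> proc * mon -> Prop :=
| wt_refl C : wtrace C [] C
| wt_tau C C1 t C' : cstep C CTau C1 -> wtrace C1 t C' -> wtrace C t C'
| wt_vis C C1 a t C' : cstep C (CVis a) C1 -> wtrace C1 t C' -> wtrace C (a :: t) C'.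

Definition xbind : var := 0%nat.

Fixpoint synth (S : stype) : mon :=
  match S with
  | TSel bs => MBra (map (fun '(l, B, S') =>
      (l, xbind, MIf (PIsValue B (AVar xbind)) (MUp l (AVar xbind) (synth S')) MNoP)) bs)
  | TBra bs => MDown (map (fun '(l, B, S') =>
      (l, xbind, MIf (PIsValue B (AVar xbind)) (MSel l (AVar xbind) (synth S')) MNoE)) bs)
  | TRec X S' => MRec X (synth S')
  | TVar X => MVar X
  | TEnd => MNil
  end.

(* Main.v *)
Require Import Defs.
From Stdlib Require Import List Arith Bool.
Import ListNotations.


Definition stype_ind2 (Q : stype -> Prop)
 (Hsel : forall bs, Forall (fun t => Q (snd t)) bs -> Q (TSel bs))
 (Hbra : forall bs, Forall (fun t => Q (snd t)) bs -> Q (TBra bs))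
 (Hrec : forall X S, Q S -> Q (TRec X S))
 (Hvar : forall X, Q (TVar X)) (Hend : Q TEnd) : forall S, Q S :=
 fix F S := match S return Q S with
 | TSel bs => Hsel bs ((fix G (l : list (label*btype*stype)) : Forall (fun t => Q (snd t)) l :=
      match l with [] => Forall_nil _ | (t1, S') :: r => @Forall_cons _ _ (t1,S') r (F S') (G r) end) bs)
 | TBra bs => Hbra bs ((fix G (l : list (label*btype*stype)) : Forall (fun t => Q (snd t)) l :=
      match l with [] => Forall_nil _ | (t1, S') :: r => @Forall_cons _ _ (t1,S') r (F S') (G r) end) bs)
 | TRec X S' => Hrec X S' (F S')
 | TVar X => Hvar X
 | TEnd => Hend
 end.

Definition proc_ind2 (Q : proc -> Prop)
 (Hsel : forall l a P, Q P -> Q (PSel l a P))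
 (Hbra : forall bs, Forall (fun t => Q (snd t)) bs -> Q (PBra bs))
 (Hrec : forall X P, Q P -> Q (PRec X P))
 (Hvar : forall X, Q (PVar X))
 (Hif : forall A P1 P2, Q P1 -> Q P2 -> Q (PIf A P1 P2))
 (Hnil : Q PNil) : forall P, Q P :=
 fix F P := match P return Q P with
 | PSel l a P' => Hsel l a P' (F P')
 | PBra bs => Hbra bs ((fix G (l : list (label*var*proc)) : Forall (fun t => Q (snd t)) l :=
      match l with [] => Forall_nil _ | (t1, S') :: r => @Forall_cons _ _ (t1,S') r (F S') (G r) end) bs)
 | PRec X P' => Hrec X P' (F P')
 | PVar X => Hvar X
 | PIf A P1 P2 => Hif A P1 P2 (F P1) (F P2)
 | PNil => Hnil
 end.

Definition tlab (t : label * btype * stype) : label := fst (fst t).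
Definition plabf (t : label * var * proc) : label := fst (fst t).

Inductive ndt : stype -> Prop :=
| ndt_sel bs : NoDup (map tlab bs) -> (forall l B S, In (l,B,S) bs -> ndt S) -> ndt (TSel bs)
| ndt_bra bs : NoDup (map tlab bs) -> (forall l B S, In (l,B,S) bs -> ndt S) -> ndt (TBra bs)
| ndt_rec X S : ndt S -> ndt (TRec X S)
| ndt_var X : ndt (TVar X)
| ndt_end : ndt TEnd.

Inductive ndp : proc -> Prop :=
| ndp_sel l a P : ndp P -> ndp (PSel l a P)
| ndp_bra bs : NoDup (map plabf bs) -> (forall l x P, In (l,x,P) bs -> ndp P) -> ndp (PBra bs)
| ndp_rec X P : ndp P -> ndp (PRec X P)
| ndp_var X : ndp (PVar X)
| ndp_if A P Q : ndp P -> ndp Q -> ndp (PIf A P Q)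
| ndp_nil : ndp PNil.

Lemma go_wf_t : forall bs : list (label*btype*stype),
  (fix go (bs : list (label * btype * stype)) : Prop :=
         match bs with [] => True | (_, _, S') :: r => wf_stype S' /\ go r end) bs ->
  forall l B S, In (l,B,S) bs -> wf_stype S.
Proof.
  induction bs as [|[[l0 B0] S0] r IH]; simpl; intros H l B S Hin; [contradiction|].
  destruct H as [H1 H2]. destruct Hin as [E|Hin]; [inversion E; subst; auto| eauto].
Qed.

Lemma map_tlab : forall bs : list (label*btype*stype),
  map (fun '(l, _, _) => l) bs = map tlab bs.
Proof. intros; apply map_ext; intros [[l B] S]; reflexivity. Qed.

Lemma wf_ndt : forall S, wf_stype S -> ndt S.
Proof.
  induction S using stype_ind2; simpl; intros Hw.
  - destruct Hw as [_ [Hn Hg]]. constructor. rewrite <- map_tlab; auto.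
    intros l B S' Hin. rewrite Forall_forall in H. apply (H _ Hin). eapply go_wf_t; eauto.
  - destruct Hw as [_ [Hn Hg]]. constructor. rewrite <- map_tlab; auto.
    intros l B S' Hin. rewrite Forall_forall in H. apply (H _ Hin). eapply go_wf_t; eauto.
  - constructor; tauto.
  - constructor.
  - constructor.
Qed.

Lemma go_wf_p : forall bs : list (label*var*proc),
  (fix go (bs : list (label * var * proc)) : Prop :=
         match bs with [] => True | (_, _, Q) :: r => wf_proc Q /\ go r end) bs ->
  forall l x P, In (l,x,P) bs -> wf_proc P.
Proof.
  induction bs as [|[[l0 B0] S0] r IH]; simpl; intros H l B S Hin; [contradiction|].
  destruct H as [H1 H2]. destruct Hin as [E|Hin]; [inversion E; subst; auto| eauto].
Qed.

Lemma map_plab : forall bs : list (label*var*proc),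
  map (fun '(l, _, _) => l) bs = map plabf bs.
Proof. intros; apply map_ext; intros [[l B] S]; reflexivity. Qed.

Lemma wf_ndp : forall P, wf_proc P -> ndp P.
Proof.
  induction P using proc_ind2; simpl; intros Hw.
  - constructor; auto.
  - destruct Hw as [Hn Hg]. constructor. rewrite <- map_plab; auto.
    intros l x P' Hin. rewrite Forall_forall in H. apply (H _ Hin). eapply go_wf_p; eauto.
  - constructor; tauto.
  - constructor.
  - constructor; tauto.
  - constructor.
Qed.

Lemma unf_det : forall S U1, unf S U1 -> forall U2, unf S U2 -> U1 = U2.
Proof.
  induction 1; intros U2 H2; inversion H2; subst; auto.
Qed.

Lemma teq_sel_inv : forall S T, teq S T -> forall bs1, unf S (TSel bs1) ->
  exists bs2, unf T (TSel bs2) /\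
   (forall l B S1, In (l, B, S1) bs1 -> exists S2, In (l, B, S2) bs2 /\ teq S1 S2) /\
   (forall l B S2, In (l, B, S2) bs2 -> exists S1, In (l, B, S1) bs1 /\ teq S1 S2).
Proof.
  intros S T H bs1 Hu; destruct H as [S T b1 b2 U1 U2 H1 H2|S T b1 b2 U1 U2 H1 H2|S T X U1 U2|S T U1 U2];
  pose proof (unf_det _ _ Hu _ U1) as E; try discriminate.
  inversion E; subst. eauto.
Qed.

Lemma teq_bra_inv : forall S T, teq S T -> forall bs1, unf S (TBra bs1) ->
  exists bs2, unf T (TBra bs2) /\
   (forall l B S1, In (l, B, S1) bs1 -> exists S2, In (l, B, S2) bs2 /\ teq S1 S2) /\
   (forall l B S2, In (l, B, S2) bs2 -> exists S1, In (l, B, S1) bs1 /\ teq S1 S2).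
Proof.
  intros S T H bs1 Hu; destruct H as [S T b1 b2 U1 U2 H1 H2|S T b1 b2 U1 U2 H1 H2|S T X U1 U2|S T U1 U2];
  pose proof (unf_det _ _ Hu _ U1) as E; try discriminate.
  inversion E; subst. eauto.
Qed.

Inductive ustar : stype -> stype -> Prop :=
| us_refl T : ustar T T
| us_rec T X S : ustar T (TRec X S) -> ustar T (tsubst X (TRec X S) S).

Lemma ustar_unf : forall T Tm, ustar T Tm -> forall U, unf Tm U -> unf T U.
Proof. induction 1; intros U Hu; auto. apply IHustar. constructor; auto. Qed.

Definition conf T Tm := ustar T Tm \/ teq T Tm.

Lemma teq_unfold : forall T X S, teq T (TRec X S) -> teq T (tsubst X (TRec X S) S).
Proof.
  intros T X S H; inversion H; subst;
  match goal with H : unf (TRec _ _) _ |- _ => inversion H; subst end.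
  - eapply teq_sel; eauto.
  - eapply teq_bra; eauto.
  - eapply teq_var; eauto.
  - eapply teq_end; eauto.
Qed.

Lemma conf_unfold : forall T X S, conf T (TRec X S) -> conf T (tsubst X (TRec X S) S).
Proof. intros T X S [H|H]; [left; constructor; auto | right; apply teq_unfold; auto]. Qed.

Definition bmatch (bs bsm : list (label*btype*stype)) :=
  (forall l B T', In (l,B,T') bs -> exists Tm', In (l,B,Tm') bsm /\ conf T' Tm') /\
  (forall l B Tm', In (l,B,Tm') bsm -> exists T', In (l,B,T') bs /\ conf T' Tm').

Lemma bmatch_refl : forall bs, bmatch bs bs.
Proof. split; intros; eexists; split; eauto; left; constructor. Qed.

Lemma conf_sel : forall T bsm, conf T (TSel bsm) -> exists bs, unf T (TSel bs) /\ bmatch bs bsm.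
Proof.
  intros T bsm [H|H].
  - exists bsm; split; [eapply ustar_unf; eauto; constructor | apply bmatch_refl].
  - inversion H; subst;
    match goal with H : unf (TSel _) _ |- _ => inversion H; subst end.
    eexists; split; eauto. split; intros.
    + edestruct H2 as [x [? ?]]; eauto. exists x; split; auto; right; auto.
    + edestruct H3 as [x [? ?]]; eauto. exists x; split; auto; right; auto.
Qed.

Lemma conf_bra : forall T bsm, conf T (TBra bsm) -> exists bs, unf T (TBra bs) /\ bmatch bs bsm.
Proof.
  intros T bsm [H|H].
  - exists bsm; split; [eapply ustar_unf; eauto; constructor | apply bmatch_refl].
  - inversion H; subst;
    match goal with H : unf (TBra _) _ |- _ => inversion H; subst end.
    eexists; split; eauto. split; intros.
    + edestruct H2 as [x [? ?]]; eauto. exists x; split; auto; right; auto.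
    + edestruct H3 as [x [? ?]]; eauto. exists x; split; auto; right; auto.
Qed.

Lemma conf_var : forall T X, conf T (TVar X) -> unf T (TVar X).
Proof.
  intros T X [H|H].
  - eapply ustar_unf; eauto; constructor.
  - inversion H; subst; match goal with H : unf (TVar _) _ |- _ => inversion H; subst end; auto.
Qed.

Lemma conf_end : forall T, conf T TEnd -> unf T TEnd.
Proof.
  intros T [H|H].
  - eapply ustar_unf; eauto; constructor.
  - inversion H; subst; match goal with H : unf TEnd _ |- _ => inversion H; subst end; auto.
Qed.


Lemma ndt_tsubst : forall X R, ndt R -> forall S, ndt S -> ndt (tsubst X R S).
Proof.
  intros X R HR S HS; induction HS; simpl.
  - constructor.
    + rewrite map_map. replace (map (fun x => tlab (let '(l, B, S') := x in (l, B, tsubst X R S'))) bs)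
        with (map tlab bs); auto. apply map_ext; intros [[l B] S']; reflexivity.
    + intros l B S' Hin. apply in_map_iff in Hin. destruct Hin as [[[l0 B0] S0] [E Hin]].
      inversion E; subst. eauto.
  - constructor.
    + rewrite map_map. replace (map (fun x => tlab (let '(l, B, S') := x in (l, B, tsubst X R S'))) bs)
        with (map tlab bs); auto. apply map_ext; intros [[l B] S']; reflexivity.
    + intros l B S' Hin. apply in_map_iff in Hin. destruct Hin as [[[l0 B0] S0] [E Hin]].
      inversion E; subst. eauto.
  - destruct (Nat.eqb X X0); constructor; auto.
  - destruct (Nat.eqb X X0); auto; constructor.
  - constructor.
Qed.

Lemma synth_tsubst : forall X R S, synth (tsubst X R S) = msubst_p X (synth R) (synth S).
Proof.
  intros X R S; induction S using stype_ind2; simpl.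
  - f_equal. rewrite !map_map. apply map_ext_in. intros [[l B] S'] Hin.
    rewrite Forall_forall in H. specialize (H _ Hin); simpl in H. simpl. rewrite H. reflexivity.
  - f_equal. rewrite !map_map. apply map_ext_in. intros [[l B] S'] Hin.
    rewrite Forall_forall in H. specialize (H _ Hin); simpl in H. simpl. rewrite H. reflexivity.
  - destruct (Nat.eqb X X0); simpl; auto. rewrite IHS; auto.
  - destruct (Nat.eqb X X0); simpl; auto.
  - auto.
Qed.

Lemma msubst_synth : forall v S, msubst_v xbind v (synth S) = synth S.
Proof.
  intros v S; induction S; simpl; auto.
  - f_equal. rewrite map_map. apply map_ext. intros [[l B] S']; reflexivity.
  - f_equal. rewrite map_map. apply map_ext. intros [[l B] S']; reflexivity.
  - rewrite IHS; auto.
Qed.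

Lemma has_btypeb_iff : forall v B, has_btypeb v B = true <-> has_btype v B.
Proof.
  induction v; intros B; destruct B; simpl; try tauto; try (split; [discriminate|tauto]).
  rewrite andb_true_iff. rewrite IHv1, IHv2; tauto.
Qed.

Lemma nodup_in : forall A B (f : A -> B) (l : list A) a1 a2,
  NoDup (map f l) -> In a1 l -> In a2 l -> f a1 = f a2 -> a1 = a2.
Proof.
  induction l; simpl; intros a1 a2 Hn H1 H2 E; [contradiction|].
  inversion Hn; subst. destruct H1; destruct H2; subst; auto;
  exfalso; apply H3; (rewrite E || rewrite <- E); apply in_map; auto.
Qed.


Section TI.
Variable Pr : penv -> venv -> proc -> stype -> Prop.
Hypothesis HBra : forall Th G pbs tbs,
  (forall l B S, In (l, B, S) tbs -> exists x P0, In (l, x, P0) pbs /\ typed Th ((x, B) :: G) P0 S /\ Pr Th ((x,B)::G) P0 S) ->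
  Pr Th G (PBra pbs) (TBra tbs).
Hypothesis HSel : forall Th G l a P0 tbs B S, In (l, B, S) tbs -> atyped G a B ->
        typed Th G P0 S -> Pr Th G P0 S -> Pr Th G (PSel l a P0) (TSel tbs).
Hypothesis HRec : forall Th G X P0 S, typed ((X, S) :: Th) G P0 S ->
        Pr ((X, S) :: Th) G P0 S -> Pr Th G (PRec X P0) S.
Hypothesis HVar : forall Th G X S, lookup Th X = Some S -> Pr Th G (PVar X) S.
Hypothesis HIf : forall Th G A P0 Q S, ptyped G A -> typed Th G P0 S ->
        Pr Th G P0 S -> typed Th G Q S -> Pr Th G Q S -> Pr Th G (PIf A P0 Q) S.
Hypothesis HNil : forall Th G, Pr Th G PNil TEnd.
Hypothesis HEq : forall Th G P0 S S', typed Th G P0 S -> Pr Th G P0 S -> teq S S' -> Pr Th G P0 S'.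

Fixpoint typed_ind2 Th G P T (H : typed Th G P T) {struct H} : Pr Th G P T :=
  match H with
  | tBra Th G pbs tbs Hb => HBra Th G pbs tbs (fun l B S0 Hin =>
      match Hb l B S0 Hin with ex_intro _ x (ex_intro _ P0 (conj Hin2 Ht)) =>
        ex_intro _ x (ex_intro _ P0 (conj Hin2 (conj Ht (typed_ind2 _ _ _ _ Ht)))) end)
  | tSel Th G l a P0 tbs B S0 Hin Ha Ht => HSel Th G l a P0 tbs B S0 Hin Ha Ht (typed_ind2 _ _ _ _ Ht)
  | tRec Th G X P0 S0 Ht => HRec Th G X P0 S0 Ht (typed_ind2 _ _ _ _ Ht)
  | tPVar Th G X S0 Hl => HVar Th G X S0 Hl
  | tIf Th G A P0 Q S0 Ha H1 H2 => HIf Th G A P0 Q S0 Ha H1 (typed_ind2 _ _ _ _ H1) H2 (typed_ind2 _ _ _ _ H2)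
  | tNil Th G => HNil Th G
  | tEqui Th G P0 S0 S1 Ht He => HEq Th G P0 S0 S1 Ht (typed_ind2 _ _ _ _ Ht) He
  end.
End TI.

Definition linc {A} (E E' : list (nat * A)) := forall x a, lookup E x = Some a -> lookup E' x = Some a.

Lemma linc_cons : forall A (E E' : list (nat*A)) y b, linc E E' -> linc ((y,b)::E) ((y,b)::E').
Proof. unfold linc; simpl; intros. destruct (Nat.eqb x y); auto. Qed.

Lemma atyped_mono : forall G G' a B, atyped G a B -> linc G G' -> atyped G' a B.
Proof. intros G G' a B H L; destruct H; constructor; auto. Qed.

Lemma ptyped_mono : forall G G' A, ptyped G A -> linc G G' -> ptyped G' A.
Proof. induction 1; intros L; econstructor; eauto using atyped_mono. Qed.

Lemma typed_mono : forall Th G P T, typed Th G P T -> forall Th' G', linc Th Th' -> linc G G' -> typed Th' G' P T.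
Proof.
  induction 1 using typed_ind2; intros Th' G' L1 L2.
  - constructor. intros l B S HS. destruct (H l B S HS) as [x [P [Hin [_ IH]]]].
    exists x, P; split; auto. apply IH; auto. apply linc_cons; auto.
  - econstructor; eauto using atyped_mono.
  - constructor. apply IHtyped; auto. apply linc_cons; auto.
  - constructor; auto.
  - constructor; eauto using ptyped_mono.
  - constructor.
  - econstructor; eauto.
Qed.

Lemma linc_nil : forall A (E : list (nat*A)), linc [] E.
Proof. unfold linc; simpl; intros; discriminate. Qed.

Lemma typed_closed : forall P T Th G, typed [] [] P T -> typed Th G P T.
Proof. intros; eapply typed_mono; eauto using linc_nil. Qed.

Lemma atyped_subst : forall G' G x v B a C, atyped G' a C -> lookup G' x = Some B -> has_btype v B ->
  (forall y C, y <> x -> lookup G' y = Some C -> lookup G y = Some C) ->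
  atyped G (asubst x v a) C.
Proof.
  intros G' G x v B a C H Hx Hv Hy. destruct H; simpl.
  - destruct (Nat.eqb x x0) eqn:E.
    + apply Nat.eqb_eq in E; subst. rewrite Hx in H; inversion H; subst. constructor; auto.
    + apply Nat.eqb_neq in E. constructor. apply Hy; auto.
  - constructor; auto.
Qed.

Lemma ptyped_subst : forall G' G x v B A, ptyped G' A -> lookup G' x = Some B -> has_btype v B ->
  (forall y C, y <> x -> lookup G' y = Some C -> lookup G y = Some C) ->
  ptyped G (predsubst x v A).
Proof. induction 1; intros; simpl; econstructor; eauto using atyped_subst. Qed.

Lemma typed_vsubst : forall Th G' Q U, typed Th G' Q U -> forall G x v B, lookup G' x = Some B -> has_btype v B ->
  (forall y C, y <> x -> lookup G' y = Some C -> lookup G y = Some C) ->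
  typed Th G (psubst_v x v Q) U.
Proof.
  induction 1 using typed_ind2; intros G0 x0 v B0 Hx Hv Hy; simpl.
  - constructor. intros l B S HS. destruct (H l B S HS) as [x [P [Hin [Ht IH]]]].
    eexists x, _; split. { apply (in_map (fun '(l, y, Q) => (l, y, if Nat.eqb x0 y then Q else psubst_v x0 v Q)) _ _ Hin). }
    destruct (Nat.eqb x0 x) eqn:E.
    + apply Nat.eqb_eq in E; subst. eapply typed_mono; [exact Ht | unfold linc; auto | ]. unfold linc; intros z c Hz. simpl in *.
      destruct (Nat.eqb z x) eqn:E'; auto. apply Nat.eqb_neq in E'. apply Hy; auto.
    + apply Nat.eqb_neq in E. eapply IH; eauto.
      * simpl. rewrite (proj2 (Nat.eqb_neq x0 x) E). eauto.
      * simpl; intros y C Hne. destruct (Nat.eqb y x); auto.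
  - econstructor; eauto using atyped_subst.
  - constructor; eauto.
  - constructor; auto.
  - constructor; eauto using ptyped_subst.
  - constructor.
  - econstructor; eauto.
Qed.

Lemma typed_vsubst0 : forall x B Q U v, typed [] [(x,B)] Q U -> has_btype v B -> typed [] [] (psubst_v x v Q) U.
Proof.
  intros. eapply typed_vsubst; eauto. simpl. rewrite Nat.eqb_refl; auto.
  simpl; intros y C Hne. apply Nat.eqb_neq in Hne. rewrite Hne. discriminate.
Qed.

Lemma typed_psubst : forall Th G Q U, typed Th G Q U -> forall X R T0 Th',
  lookup Th X = Some T0 -> (forall Y S, Y <> X -> lookup Th Y = Some S -> lookup Th' Y = Some S) ->
  typed [] [] R T0 -> typed Th' G (psubst_p X R Q) U.
Proof.
  induction 1 using typed_ind2; intros X0 R T0 Th' HX HY HR; simpl.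
  - constructor. intros l B S HS. destruct (H l B S HS) as [x [P [Hin [Ht IH]]]].
    eexists x, _; split. { apply (in_map (fun '(l, y, Q) => (l, y, psubst_p X0 R Q)) _ _ Hin). }
    eauto.
  - econstructor; eauto.
  - destruct (Nat.eqb X0 X) eqn:E.
    + apply Nat.eqb_eq in E; subst. constructor. eapply typed_mono; eauto.
      unfold linc; simpl; intros. destruct (Nat.eqb x X) eqn:E'; auto. apply Nat.eqb_neq in E'. apply HY; auto.
      unfold linc; auto.
    + constructor. eapply IHtyped; eauto.
      * simpl. rewrite E. auto.
      * simpl; intros. destruct (Nat.eqb Y X); auto.
  - destruct (Nat.eqb X0 X) eqn:E.
    + apply Nat.eqb_eq in E; subst. rewrite HX in H; inversion H; subst. apply typed_closed; auto.
    + constructor. apply HY; auto. intro; subst; rewrite Nat.eqb_refl in E; discriminate.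
  - constructor; eauto.
  - constructor.
  - econstructor; eauto.
Qed.

Lemma gen_sel : forall Th G P T, typed Th G P T -> forall l a Q, P = PSel l a Q ->
  exists bs B T', unf T (TSel bs) /\ In (l,B,T') bs /\ atyped G a B /\ typed Th G Q T'.
Proof.
  induction 1; intros l0 a0 Q0 E; try discriminate.
  - inversion E; subst. exists tbs, B, S; repeat split; auto. constructor.
  - destruct (IHtyped _ _ _ E) as [bs [B [T' [Hu [Hin [Ha Ht]]]]]].
    destruct (teq_sel_inv _ _ H0 _ Hu) as [bs2 [Hu2 [H1 _]]].
    destruct (H1 _ _ _ Hin) as [S2 [Hin2 Hq]].
    exists bs2, B, S2; repeat split; auto. econstructor; eauto.
Qed.

Lemma gen_bra : forall Th G P T, typed Th G P T -> forall pbs, P = PBra pbs ->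
  exists bs, unf T (TBra bs) /\ forall l B T', In (l,B,T') bs -> exists x Q, In (l,x,Q) pbs /\ typed Th ((x,B)::G) Q T'.
Proof.
  induction 1; intros pbs0 E; try discriminate.
  - inversion E; subst. exists tbs; split; auto. constructor.
  - destruct (IHtyped _ E) as [bs [Hu Hb]].
    destruct (teq_bra_inv _ _ H0 _ Hu) as [bs2 [Hu2 [_ H2]]].
    exists bs2; split; auto. intros l B T' Hin.
    destruct (H2 _ _ _ Hin) as [S1 [Hin1 Hq]].
    destruct (Hb _ _ _ Hin1) as [x [Q [HQ Ht]]]. exists x, Q; split; auto. econstructor; eauto.
Qed.

Lemma gen_var : forall Th G P T, typed Th G P T -> forall X, P = PVar X -> exists S, lookup Th X = Some S.
Proof. induction 1; intros X0 E; try discriminate; eauto. inversion E; subst; eauto. Qed.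

Lemma gen_if : forall Th G P T, typed Th G P T -> forall A Q1 Q2, P = PIf A Q1 Q2 ->
  ptyped G A /\ typed Th G Q1 T /\ typed Th G Q2 T.
Proof.
  induction 1; intros A0 Q1 Q2 E; try discriminate.
  - inversion E; subst; auto.
  - destruct (IHtyped _ _ _ E) as [? [? ?]]. repeat split; auto; econstructor; eauto.
Qed.

Lemma atyped_nil : forall a B, atyped [] a B -> exists v, a = AVal v /\ has_btype v B.
Proof. intros a B H; destruct H; [simpl in H; discriminate | eauto]. Qed.

Lemma ptyped_eval : forall A, ptyped [] A -> exists b, eval_pred A = Some b.
Proof.
  induction 1; simpl; eauto.
  - apply atyped_nil in H; apply atyped_nil in H0.
    destruct H as [v [-> _]]; destruct H0 as [w [-> _]]. eauto.
  - apply atyped_nil in H; apply atyped_nil in H0.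
    destruct H as [v [-> Hv]]; destruct H0 as [w [-> Hw]].
    destruct v; try contradiction; destruct w; try contradiction; eauto.
  - apply atyped_nil in H; apply atyped_nil in H0.
    destruct H as [v [-> Hv]]; destruct H0 as [w [-> Hw]].
    destruct v; try contradiction; destruct w; try contradiction; eauto.
  - destruct IHptyped1 as [b1 ->]; destruct IHptyped2 as [b2 ->]; eauto.
  - destruct IHptyped as [b ->]; simpl; eauto.
  - apply atyped_nil in H. destruct H as [v [-> _]]; eauto.
Qed.


Lemma ndp_vsubst : forall P, ndp P -> forall x v, ndp (psubst_v x v P).
Proof.
  induction 1; intros x0 v0; simpl; constructor; auto.
  - rewrite map_map. erewrite map_ext with (g := plabf); [assumption|]. intros [[l y] Q]; reflexivity.
  - intros l x P Hin. apply in_map_iff in Hin. destruct Hin as [[[l0 y0] Q0] [E Hin]].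
    inversion E; subst. destruct (Nat.eqb x0 x); eauto.
Qed.

Lemma ndp_psubst : forall R, ndp R -> forall P, ndp P -> forall X, ndp (psubst_p X R P).
Proof.
  intros R HR P HP; induction HP; intros X0; simpl; try constructor; auto.
  - rewrite map_map. erewrite map_ext with (g := plabf); [assumption|]. intros [[l y] Q]; reflexivity.
  - intros l x P Hin. apply in_map_iff in Hin. destruct Hin as [[[l0 y0] Q0] [E Hin]].
    inversion E; subst. eauto.
  - destruct (Nat.eqb X0 X); constructor; auto.
  - destruct (Nat.eqb X0 X); auto; constructor.
Qed.

Lemma ndp_step : forall P a P', pstep P a P' -> ndp P -> ndp P'.
Proof.
  intros P a P' H Hn; destruct H; inversion Hn; subst; auto.
  - apply ndp_psubst; auto.
  - apply ndp_vsubst; eauto.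
Qed.

Lemma sr_tau : forall Th G P T, typed Th G P T -> Th = [] -> G = [] ->
  forall P', pstep P PLTau P' -> typed [] [] P' T.
Proof.
  induction 1; intros E1 E2 P' Hs; subst.
  - inversion Hs.
  - inversion Hs.
  - inversion Hs; subst. eapply typed_psubst; eauto.
    + simpl. rewrite Nat.eqb_refl; auto.
    + simpl; intros Y S' Hne. apply Nat.eqb_neq in Hne; rewrite Hne; discriminate.
    + constructor; auto.
  - inversion Hs.
  - inversion Hs; subst; auto.
  - inversion Hs.
  - econstructor; eauto.
Qed.

Lemma sr_out : forall P T l v P', typed [] [] P T -> pstep P (PLOut l v) P' ->
  exists bs B T', unf T (TSel bs) /\ In (l,B,T') bs /\ has_btype v B /\ typed [] [] P' T'.
Proof.
  intros P T l v P' Ht Hs. inversion Hs; subst.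
  destruct (gen_sel _ _ _ _ Ht _ _ _ eq_refl) as [bs [B [T' [Hu [Hin [Ha Ht']]]]]].
  inversion Ha; subst. eauto 10.
Qed.

Lemma sr_in : forall P T l v P' bs B T', typed [] [] P T -> ndp P -> pstep P (PLIn l v) P' ->
  unf T (TBra bs) -> In (l,B,T') bs -> has_btype v B -> typed [] [] P' T'.
Proof.
  intros P T l v P' bs B T' Ht Hn Hs Hu Hin Hv. inversion Hs; subst.
  destruct (gen_bra _ _ _ _ Ht _ eq_refl) as [tb0 [Hu0 Hb]].
  pose proof (unf_det _ _ Hu _ Hu0) as E. inversion E; subst.
  destruct (Hb _ _ _ Hin) as [x' [Q [HQ HtQ]]].
  inversion Hn; subst.
  assert (E2 : (l, x', Q) = (l, x, P0)) by (eapply (nodup_in _ _ plabf); eauto).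
  inversion E2; subst. eapply typed_vsubst0; eauto.
Qed.

Lemma progress : forall P T, typed [] [] P T ->
  P = PNil \/ (exists P', pstep P PLTau P') \/
  (exists l v Q bs B T', P = PSel l (AVal v) Q /\ unf T (TSel bs) /\ In (l,B,T') bs) \/
  (exists pbs bs, P = PBra pbs /\ unf T (TBra bs) /\
      forall l B T', In (l,B,T') bs -> exists x Q, In (l,x,Q) pbs).
Proof.
  intros P T Ht. destruct P.
  - destruct (gen_sel _ _ _ _ Ht _ _ _ eq_refl) as [bs [B [T' [Hu [Hin [Ha Ht']]]]]].
    apply atyped_nil in Ha. destruct Ha as [v [-> _]]. right; right; left. eauto 10.
  - destruct (gen_bra _ _ _ _ Ht _ eq_refl) as [tb [Hu Hb]].
    right; right; right. eexists _, tb; repeat split; auto.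
    intros l B T' Hin. destruct (Hb _ _ _ Hin) as [x [Q [HQ _]]]; eauto.
  - right; left. eexists; constructor.
  - destruct (gen_var _ _ _ _ Ht _ eq_refl) as [S HS]. simpl in HS; discriminate.
  - destruct (gen_if _ _ _ _ Ht _ _ _ eq_refl) as [HA _].
    destruct (ptyped_eval _ HA) as [[|] Hb]; right; left; eexists.
    + apply ps_if_t; eauto.
    + apply ps_if_f; eauto.
  - left; auto.
Qed.


Definition Down P l B Tm' := exists T bs T', typed [] [] P T /\ unf T (TBra bs) /\ In (l,B,T') bs /\ conf T' Tm' /\ ndt Tm'.

Inductive minv (P : proc) : mon -> Prop :=
| mi_err : minv P MNoE
| mi_synth T Tm : typed [] [] P T -> conf T Tm -> ndt Tm -> minv P (synth Tm)
| mi_upif T Tm B l v : typed [] [] P T -> conf T Tm -> ndt Tm -> has_btype v B ->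
    minv P (MIf (PIsValue B (AVal v)) (MUp l (AVal v) (synth Tm)) MNoP)
| mi_up T Tm l v : typed [] [] P T -> conf T Tm -> ndt Tm -> minv P (MUp l (AVal v) (synth Tm))
| mi_downif l B v Tm' : Down P l B Tm' -> minv P (MIf (PIsValue B (AVal v)) (MSel l (AVal v) (synth Tm')) MNoE)
| mi_sel l B v Tm' : Down P l B Tm' -> has_btype v B -> minv P (MSel l (AVal v) (synth Tm')).

Definition Inv (C : proc * mon) := ndp (fst C) /\ minv (fst C) (snd C).

Lemma minv_ptau : forall P P' M, minv P M -> pstep P PLTau P' -> minv P' M.
Proof.
  intros P P' M H Hs; destruct H.
  - constructor.
  - econstructor; eauto. eapply sr_tau; eauto.
  - econstructor; eauto. eapply sr_tau; eauto.
  - econstructor; eauto. eapply sr_tau; eauto.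
  - destruct H as [T [bs [T' [Ht [? [? [? ?]]]]]]]. constructor. exists T, bs, T'; repeat split; auto. eapply sr_tau; eauto.
  - destruct H as [T [bs [T' [Ht [? [? [? ?]]]]]]]. econstructor; eauto. exists T, bs, T'; repeat split; auto. eapply sr_tau; eauto.
Qed.

Lemma in_synth_sel : forall bsm l x M0,
  In (l, x, M0) (map (fun '(l, B, S') =>
      (l, xbind, MIf (PIsValue B (AVar xbind)) (MUp l (AVar xbind) (synth S')) MNoP)) bsm) ->
  exists B S0, In (l,B,S0) bsm /\ x = xbind /\ M0 = MIf (PIsValue B (AVar xbind)) (MUp l (AVar xbind) (synth S0)) MNoP.
Proof.
  intros. apply in_map_iff in H. destruct H as [[[l0 B0] S0] [E Hin]]. inversion E; subst. eauto.
Qed.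

Lemma in_synth_bra : forall bsm l x M0,
  In (l, x, M0) (map (fun '(l, B, S') =>
      (l, xbind, MIf (PIsValue B (AVar xbind)) (MSel l (AVar xbind) (synth S')) MNoE)) bsm) ->
  exists B S0, In (l,B,S0) bsm /\ x = xbind /\ M0 = MIf (PIsValue B (AVar xbind)) (MSel l (AVar xbind) (synth S0)) MNoE.
Proof.
  intros. apply in_map_iff in H. destruct H as [[[l0 B0] S0] [E Hin]]. inversion E; subst. eauto.
Qed.

Lemma inv_step : forall C a C', cstep C a C' -> Inv C -> Inv C'.
Proof.
  intros C a C' Hs [Hn Hm]; destruct Hs; simpl in *; split; simpl; eauto using ndp_step.
  -
    destruct Hm; try solve [inversion H0].
    destruct Tm; simpl in H0; inversion H0; subst.
    + destruct (sr_out _ _ _ _ _ H1 H) as [tb [B [T' [Hu [Hin [Hv Ht']]]]]].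
      destruct (conf_sel _ _ H2) as [bs' [Hu' [Hb1 _]]].
      pose proof (unf_det _ _ Hu _ Hu') as E; inversion E; subst.
      destruct (Hb1 _ _ _ Hin) as [Tm' [Hin' Hc]].
      destruct (in_synth_sel _ _ _ _ H8) as [B0 [S0 [Hin0 [-> ->]]]].
      inversion H3; subst.
      assert (E2 : (l, B0, S0) = (l, B, Tm')) by (eapply (nodup_in _ _ tlab); eauto).
      inversion E2; subst. simpl. rewrite msubst_synth. econstructor; eauto.
    + exfalso. destruct (sr_out _ _ _ _ _ H1 H) as [tb [B [T' [Hu [Hin [Hv Ht']]]]]].
      destruct (conf_sel _ _ H2) as [bs' [Hu' [Hb1 _]]].
      pose proof (unf_det _ _ Hu _ Hu') as E; inversion E; subst.
      destruct (Hb1 _ _ _ Hin) as [Tm' [Hin' Hc]].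
      eapply H8. apply (in_map (fun '(l, B, S') =>
      (l, xbind, MIf (PIsValue B (AVar xbind)) (MUp l (AVar xbind) (synth S')) MNoP)) _ _ Hin'). reflexivity.
  -
    destruct Hm; try solve [inversion H0].
    + destruct Tm; simpl in H0; inversion H0.
    + inversion H0; subst.
      destruct H1 as [T [bs [T' [Ht [Hu [Hin [Hc Hnd]]]]]]].
      econstructor; eauto. eapply sr_in; eauto.
  -
    destruct Hm; try solve [inversion H].
    + destruct Tm; simpl in H; inversion H.
    + inversion H; subst. econstructor; eauto.
  -
    destruct Hm; try solve [inversion H].
    destruct Tm; simpl in H; inversion H; subst.
    + destruct (in_synth_bra _ _ _ _ H7) as [B0 [S0 [Hin0 [-> ->]]]].
      simpl. rewrite msubst_synth. constructor.
      destruct (conf_bra _ _ H1) as [bs' [Hu' [_ Hb2]]].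
      destruct (Hb2 _ _ _ Hin0) as [T' [Hin' Hc]].
      inversion H2; subst.
      exists T, bs', T'; repeat split; eauto.
    + constructor.
  - eapply minv_ptau; eauto.
  -
    destruct Hm; try solve [inversion H].
    + destruct Tm; simpl in H; inversion H; subst.
      match goal with |- minv _ (msubst_p ?X (MRec ?X (synth ?S)) (synth ?S)) =>
        change (MRec X (synth S)) with (synth (TRec X S)) end.
      rewrite <- synth_tsubst. inversion H2; subst.
      econstructor; eauto using conf_unfold. apply ndt_tsubst; auto.
    + inversion H; subst.
      * econstructor; eauto.
      * match goal with Hq : eval_pred _ = Some false |- _ => simpl in Hq; apply has_btypeb_iff in H3; rewrite H3 in Hq; discriminate end.
    + inversion H; subst.
      * match goal with Hq : eval_pred _ = Some true |- _ => simpl in Hq; inversion Hq as [Hq'] end.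
        apply has_btypeb_iff in Hq'. econstructor; eauto.
      * constructor.
Qed.

Lemma inv_trace : forall C t C', wtrace C t C' -> Inv C -> Inv C'.
Proof. induction 1; intros; eauto using inv_step. Qed.

Lemma inv_stuck : forall P M, Inv (P, M) -> (forall a C, ~ cstep (P, M) a C) -> P <> PNil -> M = MNoE.
Proof.
  intros P M [Hn Hm] Hst Hnil; simpl in *.
  destruct Hm; auto; exfalso.
  - destruct Tm; simpl in Hst.
    + destruct (progress _ _ H) as [E|[[P' Hs]|[[l [v [Q [tb [B [T' [-> [Hu Hin]]]]]]]]|[pbs [tb [-> [Hu _]]]]]]].
      * auto.
      * eapply Hst. apply cs_ptau; eauto.
      * destruct (conf_sel _ _ H0) as [bs' [Hu' [Hb1 _]]].
        pose proof (unf_det _ _ Hu _ Hu') as E; inversion E; subst.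
        destruct (Hb1 _ _ _ Hin) as [Tm' [Hin' Hc]].
        eapply Hst. eapply cs_sync_out. constructor. eapply ms_in.
        apply (in_map (fun '(l, B, S') =>
          (l, xbind, MIf (PIsValue B (AVar xbind)) (MUp l (AVar xbind) (synth S')) MNoP)) _ _ Hin').
      * destruct (conf_sel _ _ H0) as [bs' [Hu' _]].
        pose proof (unf_det _ _ Hu _ Hu') as E; inversion E.
    + destruct bs as [|[[l0 B0] S0] r].
      * eapply Hst. apply cs_down with (l := 0) (v := VBool true). apply ms_down_err. simpl; tauto.
      * eapply Hst. apply cs_down with (l := l0) (v := VBool true). eapply ms_down. simpl; left; reflexivity.
    + eapply Hst. apply cs_mtau. constructor.
    + pose proof (conf_var _ _ H0) as Hu'.
      destruct (progress _ _ H) as [E|[[P' Hs]|[[l [v [Q [tb [B [T' [-> [Hu Hin]]]]]]]]|[pbs [tb [-> [Hu _]]]]]]].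
      * auto.
      * eapply Hst. apply cs_ptau; eauto.
      * pose proof (unf_det _ _ Hu _ Hu') as E; inversion E.
      * pose proof (unf_det _ _ Hu _ Hu') as E; inversion E.
    + pose proof (conf_end _ H0) as Hu'.
      destruct (progress _ _ H) as [E|[[P' Hs]|[[l [v [Q [tb [B [T' [-> [Hu Hin]]]]]]]]|[pbs [tb [-> [Hu _]]]]]]].
      * auto.
      * eapply Hst. apply cs_ptau; eauto.
      * pose proof (unf_det _ _ Hu _ Hu') as E; inversion E.
      * pose proof (unf_det _ _ Hu _ Hu') as E; inversion E.
  - eapply Hst. apply cs_mtau. apply ms_if_t. simpl. apply has_btypeb_iff in H2. rewrite H2. reflexivity.
  - eapply Hst. apply cs_up. constructor.
  - destruct (has_btypeb v B) eqn:E.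
    + eapply Hst. apply cs_mtau. apply ms_if_t. simpl. rewrite E. reflexivity.
    + eapply Hst. apply cs_mtau. apply ms_if_f. simpl. rewrite E. reflexivity.
  - destruct H as [T [tb [T' [Ht [Hu [Hin [Hc Hnd]]]]]]].
    destruct (progress _ _ Ht) as [E|[[P' Hs]|[[l' [v' [Q [bs0 [B' [T0 [-> [Hu0 Hin0]]]]]]]]|[pbs [bs0 [-> [Hu0 Hb]]]]]]].
    + auto.
    + eapply Hst. apply cs_ptau; eauto.
    + pose proof (unf_det _ _ Hu _ Hu0) as E; inversion E.
    + pose proof (unf_det _ _ Hu _ Hu0) as E; inversion E; subst.
      destruct (Hb _ _ _ Hin) as [x [Q HQ]].
      eapply Hst. eapply cs_sync_in. eapply ps_in; eauto. constructor.
Qed.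

Theorem mainTheorem2 :
  forall (P : proc) (S : stype) (t : list vis) (P' : proc) (M' : mon),
    wf_proc P -> wf_stype S -> closed_stype S ->
    typed nil nil P S ->
    wtrace (P, synth S) t (P', M') ->
    (forall (a : clab) (C : proc * mon), ~ cstep (P', M') a C) ->
    P' <> PNil ->
    M' = MNoE.
Proof.
  intros P S t P' M' Hwp Hws _ Ht Htr Hst Hnil.
  eapply inv_stuck; eauto. eapply inv_trace; eauto.
  split; simpl. apply wf_ndp; auto.
  econstructor; eauto. left; constructor. apply wf_ndt; auto.
Qed.
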